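(* Let $r,s$ be positive integers, let $k=2^{8}r^{2}$ and let $c\ge 8rs\binom{k}{r}$. Let $M$ be an $n\times n$ zero-one matrix such that $k\mid n$ and $w(M)\ge cn^{3/2}$. Then either (i) $M$ contains an $\frac nk\times\frac nk$ matrix $N$ with $w(N)\ge 2c\left(\frac nk\right)^{3/2}$, or (ii) for some positive integer $m$, $M$ contains an $\frac{nr}{k}\times m$ matrix $N$ that is $r$-balanced and satisfies $w(N)\ge rs\sqrt{m}\left(\frac{nr}{k}\right)$.
   Context: $w(M)$ is the number of $1$-entries of $M$; $M$ contains $N$ if one can delete some rows and columns of $M$ and turn some $1$-entries into $0$-entries so that the result is $N$. An $a\times m$ zero-one matrix $N$ is $r$-balanced if $r\mid a$ and for every column $c\in[m]$ the number of $1$-entries among $N((i-1)\frac ar+1,c),\dots,N(i\frac ar,c)$ is the same for all $i\in[r]$. *)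

(* Defs.v *)
From HB Require Import structures.
From mathcomp Require Import all_boot all_order all_algebra.
From mathcomp Require Import reals.
Set Implicit Arguments. Unset Strict Implicit. Unset Printing Implicit Defensive.
Import Order.TTheory GRing.Theory Num.Theory.

Definition weight (p q : nat) (M : 'M[bool]_(p, q)) : nat :=
  #|[set ij : 'I_p * 'I_q | M ij.1 ij.2]|.

(* M contains N: delete some rows and columns of M (keeping the order of the
   remaining ones) and turn some 1-entries into 0-entries to obtain N. *)
Definition contains (p q a b : nat) (M : 'M[bool]_(p, q)) (N : 'M[bool]_(a, b)) : Prop :=
  exists (f : 'I_a -> 'I_p) (g : 'I_b -> 'I_q),
    (forall i j : 'I_a, (i < j)%N -> (f i < f j)%N) /\
    (forall i j : 'I_b, (i < j)%N -> (g i < g j)%N) /\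
    (forall (i : 'I_a) (j : 'I_b), N i j -> M (f i) (g j)).

Definition block_count (a m : nat) (N : 'M[bool]_(a, m)) (r i : nat) (c : 'I_m) : nat :=
  #|[set x : 'I_a | (i * (a %/ r) <= x < i.+1 * (a %/ r))%N & N x c]|.

Definition balanced (r a m : nat) (N : 'M[bool]_(a, m)) : Prop :=
  (r %| a)%N /\
  forall (c : 'I_m) (i j : nat), (i < r)%N -> (j < r)%N ->
    block_count N r i c = block_count N r j c.

(* Main.v *)
Require Import Defs.
From HB Require Import structures.
From mathcomp Require Import all_boot all_order all_algebra.
From mathcomp Require Import reals.
From mathcomp Require Import zify.
From mathcomp.algebra_tactics Require Import ring lra.
Import Order.TTheory GRing.Theory Num.Theory.

Module Helpers.
Set Implicit Arguments. Unset Strict Implicit. Unset Printing Implicit Defensive.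

Lemma sorted_val_enum p (A : {set 'I_p}) : sorted ltn (map val (enum A)).
Proof.
  rewrite -[enum _](eq_filter (mem_enum _)).
  rewrite -(eq_filter (mem_map val_inj _)) -filter_map.
  by rewrite (sorted_filter ltn_trans) // unlock val_ord_enum iota_ltn_sorted.
Qed.

Lemma size_val_enum p (A : {set 'I_p}) : size (map val (enum A)) = #|A|.
Proof. by rewrite size_map cardE. Qed.

Lemma nth_val_enum p (A : {set 'I_p}) j : (j < #|A|)%N ->
  exists2 c, c \in A & val c = nth 0%N (map val (enum A)) j.
Proof.
  move=> hj. have : nth 0%N (map val (enum A)) j \in map val (enum A).
    by apply: mem_nth; rewrite size_val_enum.
  case/mapP=> c; rewrite mem_enum => cA ->. by exists c.
Qed.

Lemma nth_val_enum_lt p (A : {set 'I_p}) j : (j < #|A|)%N ->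
  (nth 0%N (map val (enum A)) j < p)%N.
Proof. by move=> h; case: (nth_val_enum h) => c _ <-; apply: ltn_ord. Qed.

Lemma nth_val_enum_inc p (A : {set 'I_p}) j j' : (j < j' < #|A|)%N ->
  (nth 0%N (map val (enum A)) j < nth 0%N (map val (enum A)) j')%N.
Proof.
  case/andP=> h1 h2. apply: (sorted_ltn_nth ltn_trans) => //.
  - exact: sorted_val_enum.
  - by rewrite inE size_val_enum (ltn_trans h1).
  - by rewrite inE size_val_enum.
Qed.

Lemma sum_val_enum p (A : {set 'I_p}) (h : nat -> nat) :
  (\sum_(0 <= j < #|A|) h (nth 0%N (map val (enum A)) j) = \sum_(c in A) h (val c))%N.
Proof.
  by rewrite -big_enum -(big_map val xpredT h) [RHS](big_nth 0%N) size_map -cardE.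
Qed.

Lemma sum_blocks (k a : nat) (h : nat -> nat) :
  (\sum_(0 <= x < k * a) h x = \sum_(0 <= i < k) \sum_(0 <= o < a) h (i * a + o))%N.
Proof.
  elim: k => [|k IH]; first by rewrite mul0n !big_geq.
  rewrite big_nat_recr //= -IH mulSn addnC (big_cat_nat _ (leq_addr _ _)) //=.
  congr (_ + _)%N. rewrite -{1}(add0n (k * a)) big_addn addKn.
  by apply: eq_bigr => o _; rewrite addnC.
Qed.

Lemma prefix_min (h : nat -> bool) (t A : nat) :
  (\sum_(0 <= o < A) (h o && (\sum_(0 <= o' < o) h o' < t)%N) = minn t (\sum_(0 <= o < A) h o))%N.
Proof.
  elim: A => [|A IH]; first by rewrite !big_geq // minn0.
  rewrite !big_nat_recr //= IH.
  case: (h A) => /=; last by rewrite !addn0.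
  set S := (\sum_(0 <= i < A) h i)%N. case: (ltnP S t) => H /=; lia.
Qed.

Lemma weight_nat p q (Nn : nat -> nat -> bool) :
  weight (\matrix_(i < p, j < q) Nn i j) = (\sum_(0 <= i < p) \sum_(0 <= j < q) Nn i j)%N.
Proof.
  rewrite /weight -sum1_card big_mkcond /=.
  rewrite big_mkord. rewrite (eq_bigr (fun i : 'I_p => \sum_(j < q) (Nn i j : nat))); last first.
    by move=> i _; rewrite big_mkord.
  rewrite pair_big /=. apply: eq_bigr => -[i j] _ /=. rewrite inE /= mxE. by case: (Nn i j).
Qed.

Lemma contains_nat p q a b (M : 'M[bool]_(p.+1, q.+1)) (Nn : nat -> nat -> bool)
  (F G : nat -> nat) :
  (forall x, (x < a)%N -> (F x < p.+1)%N) -> (forall y, (y < b)%N -> (G y < q.+1)%N) ->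
  (forall x x', (x < x')%N -> (x' < a)%N -> (F x < F x')%N) ->
  (forall y y', (y < y')%N -> (y' < b)%N -> (G y < G y')%N) ->
  (forall x y, (x < a)%N -> (y < b)%N -> Nn x y -> M (inord (F x)) (inord (G y))) ->
  contains M (\matrix_(x < a, y < b) Nn x y).
Proof.
  move=> Fb Gb Fi Gi HN.
  exists (fun x => inord (F x)), (fun y => inord (G y)); split; [|split].
  - move=> x x' h. rewrite !inordK ?Fb ?ltn_ord //. exact: Fi.
  - move=> y y' h. rewrite !inordK ?Gb ?ltn_ord //. exact: Gi.
  - move=> x y. rewrite mxE. exact: HN.
Qed.

Lemma block_count_nat r a m (Nn : nat -> nat -> bool) i (c : 'I_m) :
  (0 < r)%N -> (i < r)%N ->
  block_count (\matrix_(x < r * a, y < m) Nn x y) r i c = (\sum_(0 <= o < a) Nn (i * a + o) c)%N.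
Proof.
  move=> r0 ir. rewrite /block_count mulKn // -sum1_card big_mkcond /=.
  rewrite (eq_bigr (fun x : 'I_(r * a) => ((i * a <= x < i.+1 * a) && Nn x c : nat))); last first.
    by move=> x _; rewrite inE mxE; case: (_ && _).
  rewrite -(big_mkord xpredT (fun x => ((i * a <= x < i.+1 * a) && Nn x c : nat))).
  rewrite sum_blocks big_mkord (bigD1 (Ordinal ir)) //= [X in (_ + X)%N]big1 ?addn0.
    rewrite big_nat [RHS]big_nat; apply: eq_bigr => o /andP [_ oa].
    have -> : (i * a <= i * a + o < i.+1 * a) = true by rewrite mulSn; apply/andP; split; lia.
    by [].
  move=> j ji. rewrite big_nat big1 // => o /andP [_ oa].
  have -> : (i * a <= j * a + o < i.+1 * a) = false; last by [].
  have : (val j != i) by apply: contra ji => /eqP h; apply/eqP/val_inj.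
  case: (ltngtP j i) => // h _.
  - have : (j.+1 * a <= i * a)%N by apply: leq_mul.
    rewrite mulSn => h2. apply/negbTE; rewrite negb_and; apply/orP; left. rewrite -ltnNge. lia.
  - have : (i.+1 * a <= j * a)%N by apply: leq_mul.
    rewrite mulSn => h2. apply/negbTE; rewrite negb_and; apply/orP; right. rewrite -leqNgt. lia.
Qed.

Lemma blockF_inc (a R : nat) (s : nat -> nat) x x' : (0 < a)%N ->
  (forall j j', (j < j')%N -> (j' < R)%N -> (s j < s j')%N) -> (x < x')%N -> (x' < R * a)%N ->
  (s (x %/ a) * a + x %% a < s (x' %/ a) * a + x' %% a)%N.
Proof.
  move=> a0 sinc xx' x'R.
  have q' : (x' %/ a < R)%N by rewrite ltn_divLR.
  have qq : (x %/ a <= x' %/ a)%N by apply: leq_div2r; apply: ltnW.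
  have ox : (x %% a < a)%N by rewrite ltn_mod.
  have ox' : (x' %% a < a)%N by rewrite ltn_mod.
  have ex := divn_eq x a. have ex' := divn_eq x' a.
  case: (ltngtP (x %/ a) (x' %/ a)) qq => // hq _.
  - have := sinc _ _ hq q' => hs.
    have : ((s (x %/ a)).+1 * a <= s (x' %/ a) * a)%N by apply: leq_mul.
    rewrite mulSn. lia.
  - rewrite hq in ex *. lia.
Qed.

Lemma subset_size (T : finType) (A B : {set T}) j :
  A \subset B -> (#|A| <= j)%N -> (j <= #|B|)%N ->
  exists C : {set T}, [/\ A \subset C, C \subset B & #|C| = j].
Proof.
  move=> AB Aj jB. have [d Ej] : exists d, j = (#|A| + d)%N by exists (j - #|A|)%N; lia.
  rewrite Ej in jB *; clear Ej Aj j.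
  move: A AB jB. elim: d => [|d IH] A AB jB.
    by exists A; rewrite addn0; split.
  have : ~~ (B \subset A).
    apply/negP => BA. have := subset_leq_card BA. lia.
  case/subsetPn => x xB xA.
  have [||C [h1 h2 h3]] := IH (x |: A).
  - by rewrite subUset sub1set xB AB.
  - rewrite cardsU1 xA. lia.
  - exists C; split => //. apply: subset_trans h1. exact: subsetUr.
    rewrite h3 cardsU1 xA. lia.
Qed.

Lemma card_setI_sum (T : finType) (G : {set T}) (P : pred T) :
  #|[set c in G | P c]| = (\sum_(c in G) P c)%N.
Proof.
  rewrite -sum1_card [LHS]big_mkcond [RHS]big_mkcond /=.
  apply: eq_bigr => c _; rewrite !inE. by case: (c \in G); case: (P c).
Qed.

Lemma pigeon (T U : finType) (G : {set T}) (B : T -> {set U}) r :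
  (r <= #|U|)%N -> (forall c, c \in G -> (r <= #|B c|)%N) ->
  exists S : {set U}, #|S| = r /\
    (#|G| <= #|[set c in G | S \subset B c]| * 'C(#|U|, r))%N.
Proof.
  move=> rU HB.
  case: (boolP [exists S : {set U}, (#|S| == r) &&
      (#|G| <= #|[set c in G | S \subset B c]| * 'C(#|U|, r))%N]).
    by case/existsP => S /andP [/eqP h1 h2]; exists S.
  rewrite negb_exists => /forallP H. exfalso.
  set Rs := [set S : {set U} | #|S| == r].
  set C := 'C(#|U|, r).
  have C0 : (0 < C)%N by rewrite bin_gt0.
  have h1 : (#|G| <= \sum_(S in Rs) #|[set c in G | S \subset B c]|)%N.
    under eq_bigr => S _ do rewrite card_setI_sum.
    rewrite exchange_big /= -sum1_card. apply: leq_sum => c cG.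
    have c0 : (#|@set0 U| <= r)%N by rewrite cards0.
    have [S0 [_ S0B S0r]] := subset_size (sub0set (B c)) c0 (HB c cG).
    have S0R : S0 \in Rs by rewrite inE S0r.
    rewrite (bigD1 S0) //= S0B. exact: leq_addr.
  have h2 : (\sum_(S in Rs) (#|[set c in G | S \subset B c]| * C + 1) <= \sum_(S in Rs) #|G|)%N.
    apply: leq_sum => S; rewrite inE => SR. have := H S. rewrite SR /= -ltnNge -/C. lia.
  rewrite big_split /= -big_distrl /= sum1_card sum_nat_const card_draws -/C in h2.
  have := leq_mul h1 (leqnn C). move: h2; rewrite mulnC; lia.
Qed.

Local Open Scope ring_scope.

Lemma g_ineq (R : realType) (r a u g k : R) : 1 <= r -> 0 < u -> 0 < a -> k = 256 * r ^+ 2 ->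
  16 * r * k * a * u <= 2 * k * a * u + 2 * u * (k * a * r + k * g) + 8 * r * k * a * u ->
  2 * r * a <= g.
Proof.
  move=> r1 u0 a0 ->. move=> H.
  have k0 : 0 < 2 * (256 * r ^+ 2) * u.
    apply: mulr_gt0 => //; apply: mulr_gt0 => //; apply: mulr_gt0 => //.
    apply: exprn_gt0; lra.
  have : 0 <= (2 * (256 * r ^+ 2) * u) * (g - 3 * r * a + a).
    rewrite -subr_ge0 in H. set X := (X in 0 <= X) in H.
    have -> : (2 * (256 * r ^+ 2) * u) * (g - 3 * r * a + a) = X by rewrite /X; ring.
    exact: H.
  rewrite pmulr_rge0 // => h. nra.
Qed.

Lemma final_ineq (R : realType) (r s a t m C c sa g : R) :
  1 <= r -> 1 <= s -> 1 <= a -> 0 <= sa -> sa ^+ 2 = a -> 256 * r <= C -> 8 * r * s * C <= c ->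
  c * sa / (32 * r) < t + 1 -> 2 * r * a <= g -> g <= m * C -> 0 <= t -> 0 <= m ->
  (r * s * a) ^+ 2 <= t ^+ 2 * m.
Proof.
  move=> r1 s1 a1 sa0 saE rC cC ht ga gm t0 m0.
  have sa1 : 1 <= sa by nra.
  have hx : c * sa < 32 * r * (t + 1).
    have r0 : 0 < 32 * r by lra.
    by move: ht; rewrite ltr_pdivrMr //; lra.
  have cbig : 8 * r * s * 256 * r * sa <= c * sa.
    apply: ler_wpM2r => //.
    have : 8 * r * s * (256 * r) <= 8 * r * s * C by apply: ler_wpM2l => //; nra.
    lra.
  have p1 : 1 <= s * sa by nra.
  have p2 : 1 <= r * (s * sa) by nra.
  have p3 : 2048 * r <= 8 * r * s * 256 * r * sa.
    have -> : 8 * r * s * 256 * r * sa = 2048 * r * (r * (s * sa)) by ring.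
    rewrite -{1}[2048 * r]mulr1. apply: ler_wpM2l => //; lra.
  have p4 : 2048 * r < 32 * r * (t + 1) by lra.
  have t1 : 1 <= t.
    have : 0 < 32 * r * (t + 1 - 64) by rewrite mulrDr mulrDr; lra.
    rewrite pmulr_rgt0; lra.
  have t2 : c * sa <= 64 * r * t.
    have : r <= r * t by rewrite -{1}[r]mulr1; apply: ler_wpM2l; lra.
    lra.
  have h1 : (8 * r * s * C) ^+ 2 * a <= (64 * r * t) ^+ 2.
    have : (8 * r * s * C) * sa <= 64 * r * t by nra.
    move=> h. have h' : ((8 * r * s * C) * sa) ^+ 2 <= (64 * r * t) ^+ 2.
      by rewrite ler_sqr ?nnegrE; [ | nra | nra].
    by rewrite exprMn saE in h'.
  have h2 : s ^+ 2 * C ^+ 2 * a <= 64 * t ^+ 2.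
    have r2 : 0 < 64 * r ^+ 2 by apply: mulr_gt0 => //; apply: exprn_gt0; lra.
    rewrite -(ler_pM2l r2).
    have -> : 64 * r ^+ 2 * (s ^+ 2 * C ^+ 2 * a) = (8 * r * s * C) ^+ 2 * a by ring.
    have -> : 64 * r ^+ 2 * (64 * t ^+ 2) = (64 * r * t) ^+ 2 by ring.
    exact: h1.
  have h3 : s ^+ 2 * C ^+ 2 * a * m <= 64 * t ^+ 2 * m by apply: ler_wpM2r.
  have h4 : s ^+ 2 * C * a * (2 * r * a) <= s ^+ 2 * C * a * (m * C).
    have C0 : 0 <= C by lra.
    have a0 : 0 <= a by lra.
    apply: ler_wpM2l; last by lra.
    apply: mulr_ge0 => //; apply: mulr_ge0 => //; exact: sqr_ge0.
  have h5 : s ^+ 2 * (256 * r) * a * (2 * r * a) <= s ^+ 2 * C * a * (2 * r * a).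
    have a0 : 0 <= a by lra.
    apply: ler_wpM2r. apply: mulr_ge0 => //; lra.
    apply: ler_wpM2r => //. apply: ler_wpM2l => //. exact: sqr_ge0.
  have -> : (r * s * a) ^+ 2 = s ^+ 2 * (256 * r) * a * (2 * r * a) / 512 by field.
  rewrite (_ : s ^+ 2 * C ^+ 2 * a * m = s ^+ 2 * C * a * (m * C)) in h3; last by ring.
  have : 0 <= t ^+ 2 * m by apply: mulr_ge0 => //; exact: sqr_ge0.
  lra.
Qed.

Lemma core (R : realType) (r s k : nat) (c : R) (a p : nat) (M : 'M[bool]_(p.+1, p.+1)) :
  (0 < r)%N -> (0 < s)%N -> k = (2 ^ 8 * r ^ 2)%N ->
  (8 * r * s * 'C(k, r))%:R <= c -> p.+1 = (k * a)%N ->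
  c * ((p.+1)%:R * Num.sqrt ((p.+1)%:R : R)) <= (weight M)%:R ->
  (exists N : 'M[bool]_(a, a), contains M N /\
      2%:R * c * (a%:R * Num.sqrt (a%:R : R)) <= (weight N)%:R)
  \/ (exists (m : nat) (N : 'M[bool]_(r * a, m)), (0 < m)%N /\ contains M N /\ balanced r N /\
      (r * s)%:R * Num.sqrt (m%:R : R) * (r * a)%:R <= (weight N)%:R).
Proof.
  move=> r0 s0 Ek Hc En Hw.
  have a0 : (0 < a)%N by move: En; case: a => //; rewrite muln0.
  have k0 : (0 < k)%N by rewrite Ek; lia.
  have rk : (r <= k)%N by rewrite Ek; nia.
  pose Mn x y := M (inord x) (inord y).
  have EM : M = \matrix_(i < p.+1, j < p.+1) Mn i j.
    by apply/matrixP => i j; rewrite mxE /Mn !inord_val.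
  pose D (i y : nat) := (\sum_(0 <= o < a) Mn (i * a + o) y)%N.
  have HW : weight M = (\sum_(y < p.+1) \sum_(i < k) D i y)%N.
    rewrite {1}EM weight_nat exchange_big_nat /= big_mkord.
    apply: eq_bigr => y _. rewrite {1}En sum_blocks big_mkord. by [].
  set ra := (a%:R : R). set sa := Num.sqrt ra. set T := 2 * c * sa.
  case: (boolP [exists i : 'I_k, exists A : {set 'I_p.+1}, (#|A| == a) &&
     (2%:R * c * (ra * sa) <= ((\sum_(y in A) D i y)%N)%:R)]).
    case/existsP => i /existsP [A /andP [/eqP Aa HA]]. left.
    pose G y := nth 0%N (map val (enum A)) y.
    exists (\matrix_(x < a, y < a) Mn (i * a + x)%N (G y)). split.
      apply: (contains_nat (Nn := fun x y => Mn (i * a + x)%N (G y)) (F := fun x => (i * a + x)%N) (G := G)).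
      - move=> x xa. rewrite En. have : (i.+1 * a <= k * a)%N by apply: leq_mul.
        rewrite mulSn. lia.
      - by move=> y ya; apply: nth_val_enum_lt; rewrite Aa.
      - move=> x x' h _. lia.
      - by move=> y y' h h'; apply: nth_val_enum_inc; rewrite Aa h h'.
      - by [].
    rewrite (weight_nat a a (fun x y => Mn (i * a + x)%N (G y))) exchange_big_nat /=.
    rewrite (_ : (\sum_(0 <= j < a) \sum_(0 <= i0 < a) Mn (i * a + i0)%N (G j))%N
       = \sum_(0 <= j < #|A|) D i (G j))%N; last by rewrite Aa.
    by rewrite sum_val_enum.
  move=> Hn.
  have H : forall (i : 'I_k) (A : {set 'I_p.+1}), #|A| = a ->
      ((\sum_(y in A) D i y)%N)%:R < 2%:R * c * (ra * sa).
    move=> i A Aa; move: Hn; rewrite negb_exists => /forallP /(_ i).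
    rewrite negb_exists => /forallP /(_ A). by rewrite Aa eqxx /= -ltNge.
  have c0 : 0 < c.
    apply: lt_le_trans Hc. by rewrite ltr0n !muln_gt0 r0 s0 /= bin_gt0 rk.
  have sa0 : 0 <= sa by apply: sqrtr_ge0.
  pose L (i : 'I_k) := [set y : 'I_p.+1 | T <= (D i y)%:R].
  have HL : forall i, ((\sum_(y in L i) D i y)%N)%:R <= 2%:R * c * (ra * sa).
    move=> i. case: (leqP a #|L i|) => hL.
    - exfalso.
      have h0 : (#|@set0 'I_p.+1| <= a)%N by rewrite cards0.
      have [A [_ AL Aa]] := subset_size (sub0set (L i)) h0 hL.
      have := H i A Aa. rewrite natr_sum.
      have : \sum_(y in A) T <= \sum_(y in A) ((D i y)%:R : R).
        apply: ler_sum => y yA. have := subsetP AL y yA. by rewrite inE.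
      rewrite sumr_const Aa -mulr_natr /T /ra. lra.
    - have h1 : (a <= #|[set: 'I_p.+1]|)%N by rewrite cardsT card_ord En; nia.
      have [A [LA _ Aa]] := subset_size (subsetT (L i)) (ltnW hL) h1.
      apply: ltW; apply: le_lt_trans (H i A Aa). rewrite ler_nat.
      rewrite [X in (X <= _)%N]big_mkcond [X in (_ <= X)%N]big_mkcond /=.
      apply: leq_sum => y _. case: ifP => // yL. by rewrite (subsetP LA y yL).
  have r0R : (0:R) < r%:R by rewrite ltr0n.
  pose u := c * sa.
  have u0 : 0 <= u by rewrite /u mulr_ge0 // ltW.
  pose x := u / (32 * r%:R).
  have x0 : 0 <= x by rewrite /x divr_ge0 // mulr_ge0 // ltW.
  pose t := Num.truncn x.
  have /andP [tx1 tx2] := truncn_itv x0. rewrite -/t in tx1 tx2.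
  pose Bc (y : 'I_p.+1) := [set i : 'I_k | (t <= D i y)%N].
  pose G := [set y : 'I_p.+1 | (r <= #|Bc y|)%N].
  have cG : #|G| = (\sum_(y < p.+1) (y \in G : nat))%N.
    by rewrite -sum1_card big_mkcond /=; apply: eq_bigr => y _; case: (y \in G).
  have E2 : (\sum_(y < p.+1) #|Bc y| <= p.+1 * r + k * #|G|)%N.
    apply: (@leq_trans (\sum_(y < p.+1) (r + k * (y \in G)))%N).
      apply: leq_sum => y _. case: (boolP (y \in G)) => yG.
        have : (#|Bc y| <= k)%N by rewrite -[k in (_ <= k)%N]card_ord; apply: max_card.
        rewrite muln1 => h. exact: leq_trans h (leq_addl r k).
      move: (yG); rewrite inE -ltnNge => yG'. rewrite muln0 addn0. exact: ltnW.
    by rewrite big_split /= sum_nat_const card_ord -big_distrr /= cG mulnC.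
  have T0 : 0 <= T by rewrite /T -mulrA mulr_ge0 ?mulr_ge0 // ltW.
  have key : forall y : 'I_p.+1, ((\sum_(i < k) D i y)%N)%:R <=
      ((\sum_(i < k) (if y \in L i then D i y else 0))%N)%:R + (#|Bc y|)%:R * T + ((k * t)%N)%:R :> R.
    move=> y.
    have -> : #|Bc y| = (\sum_(i < k) (t <= D i y : nat))%N.
      by rewrite -sum1_card big_mkcond /=; apply: eq_bigr => i _; rewrite inE; case: (_ <= _)%N.
    rewrite !natr_sum mulr_suml.
    rewrite (_ : ((k * t)%N%:R : R) = \sum_(i < k) (t%:R : R)); last first.
      by rewrite sumr_const card_ord natrM mulr_natl.
    rewrite -!big_split /=. apply: ler_sum => i _.
    rewrite /L inE. case: ifP => hT; case: (leqP t (D i y)) => ht /=.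
    - have : (0:R) <= t%:R by []. lra.
    - have : (0:R) <= t%:R by []. lra.
    - move/negbT: hT; rewrite -ltNge => hT. have : (0:R) <= t%:R by []. lra.
    - have : ((D i y)%:R : R) <= t%:R by rewrite ler_nat ltnW.
      have : (0:R) <= T by []. lra.
  pose E1 := (\sum_(y < p.+1) \sum_(i < k) (if y \in L i then D i y else 0))%N.
  pose E2v := (\sum_(y < p.+1) #|Bc y|)%N.
  have Wle : ((weight M)%:R : R) <= E1%:R + E2v%:R * T + ((p.+1 * (k * t))%N)%:R.
    rewrite HW natr_sum. apply: le_trans (ler_sum _ (fun y _ => key y)) _.
    rewrite !big_split /= /E1 /E2v !natr_sum -mulr_suml sumr_const card_ord.
    by rewrite [X in _ <= _ + X]natrM mulr_natl.
  have hE1 : (E1%:R : R) <= 2 * k%:R * ra * u.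
    rewrite /E1 exchange_big /= natr_sum.
    under eq_bigr => i _ do rewrite -big_mkcond.
    apply: le_trans (ler_sum _ (fun i _ => HL i)) _.
    rewrite sumr_const card_ord -mulr_natl /u. lra.
  have kR : (k%:R : R) = (16 * r%:R) ^+ 2.
    rewrite Ek natrM !natrX. ring.
  have nR : ((p.+1)%:R : R) = k%:R * ra by rewrite En natrM.
  have sqn : Num.sqrt ((p.+1)%:R : R) = 16 * r%:R * sa.
    rewrite nR sqrtrM; last by rewrite kR sqr_ge0.
    rewrite kR sqrtr_sqr ger0_norm //. by rewrite mulr_ge0 // ltW.
  have hE2 : (E2v%:R : R) * T <= 2 * u * (k%:R * ra * r%:R + k%:R * (#|G|)%:R).
    apply: le_trans (ler_wpM2r T0 (_ : E2v%:R <= ((p.+1 * r + k * #|G|)%N)%:R)) _.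
      by rewrite ler_nat.
    rewrite natrD !natrM nR /T /u. lra.
  have hnkt : (((p.+1 * (k * t))%N)%:R : R) <= 8 * r%:R * k%:R * ra * u.
    have h32 : (t%:R : R) * (32 * r%:R) <= u.
      by rewrite -ler_pdivlMr // mulr_gt0.
    rewrite !natrM nR.
    have -> : (k%:R * ra * (k%:R * t%:R) : R) = (8 * r%:R * k%:R * ra) * (t%:R * (32 * r%:R)).
      rewrite {2}kR. ring.
    apply: ler_wpM2l => //. rewrite !mulr_ge0 // ?ler0n //. 
  have hlow : 16 * r%:R * k%:R * ra * u <= (weight M)%:R.
    apply: le_trans Hw. rewrite sqn nR /u. lra.
  have gR : 2 * r%:R * ra <= (#|G|)%:R :> R.
    apply: (@g_ineq R r%:R ra u _ k%:R).
    - by rewrite ler1n.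
    - by rewrite /u mulr_gt0 // /sa sqrtr_gt0 ltr0n.
    - by rewrite ltr0n.
    - by rewrite kR; ring.
    - apply: le_trans hlow _. apply: le_trans Wle _.
      apply: lerD; first apply: lerD; [exact: hE1 | exact: hE2 | exact: hnkt].
  have rK : (r <= #|'I_k|)%N by rewrite card_ord.
  have HB : forall y, y \in G -> (r <= #|Bc y|)%N by move=> y; rewrite inE.
  have [S [Sr HS]] := pigeon rK HB.
  rewrite card_ord in HS.
  set F := [set y in G | S \subset Bc y] in HS.
  have CR : (256 * r <= 'C(k, r))%N.
    have := mul_bin_diag k r.-1. rewrite prednK // => e.
    have hC' : (0 < 'C(k.-1, r.-1))%N by rewrite bin_gt0 -!subn1 leq_sub2r.
    have kE : k = (r * (256 * r))%N by rewrite Ek -mulnn mulnCA.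
    have e2 : (r * (256 * r) <= r * 'C(k, r))%N.
      rewrite -e -kE. exact: leq_pmulr.
    by rewrite leq_pmul2l in e2.
  have gpos : (0 < #|G|)%N.
    rewrite lt0n; apply/eqP => g0; move: gR; rewrite g0.
    have : (0:R) < 2 * r%:R * ra by rewrite !mulr_gt0 // ltr0n.
    lra.
  have m0 : (0 < #|F|)%N.
    rewrite lt0n; apply/eqP => m0; move: HS; rewrite m0 mul0n leqn0 => /eqP g0.
    by move: gpos; rewrite g0.
  right. exists #|F|.
  pose sS j := nth 0%N (map val (enum S)) j.
  pose sC y := nth 0%N (map val (enum F)) y.
  pose Mb j o y := Mn (sS j * a + o)%N (sC y).
  pose Nn x y := Mb (x %/ a)%N (x %% a)%N y &&
     (\sum_(0 <= o' < x %% a) Mb (x %/ a)%N o' y < t)%N.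
  exists (\matrix_(x < r * a, y < #|F|) Nn x y).
  have blk : forall i y, (i < r)%N -> (y < #|F|)%N ->
      (\sum_(0 <= o < a) Nn (i * a + o)%N y)%N = t.
    move=> i y ir yF.
    have -> : (\sum_(0 <= o < a) Nn (i * a + o)%N y = \sum_(0 <= o < a) (Mb i o y &&
        (\sum_(0 <= o' < o) Mb i o' y < t)%N))%N.
      apply: eq_big_nat => o /andP [_ oa].
      by rewrite /Nn divnMDl // (divn_small oa) addn0 modnMDl (modn_small oa).
    rewrite prefix_min. apply/minn_idPl.
    have iS : (i < #|S|)%N by rewrite Sr.
    have [c' c'S ec'] := nth_val_enum iS.
    have [y' y'F ey'] := nth_val_enum yF.
    move: y'F; rewrite inE => /andP [_ /subsetP /(_ c' c'S)]; rewrite inE => hD.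
    by move: hD; rewrite /D ec' ey'.
  split; first exact: m0.
  split.
    apply: (contains_nat (Nn := Nn) (F := fun x => (sS (x %/ a) * a + x %% a)%N) (G := sC)).
    - move=> z xr.
      have q : (z %/ a < #|S|)%N by rewrite Sr ltn_divLR.
      have := nth_val_enum_lt q. rewrite -/(sS _) => hs.
      have : ((sS (z %/ a)).+1 * a <= k * a)%N by apply: leq_mul.
      have : (z %% a < a)%N by rewrite ltn_mod.
      rewrite mulSn En => h1 h2. apply: leq_trans h2.
      by rewrite [(a + _)%N]addnC ltn_add2l.
    - by move=> y yF; apply: nth_val_enum_lt.
    - move=> z z' h h'. apply: (blockF_inc (R := r)) => // j j' hj hj'.
      by apply: nth_val_enum_inc; rewrite hj Sr hj'.
    - by move=> y y' h h'; apply: nth_val_enum_inc; rewrite h h'.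
    - by move=> z w _ _ /andP [].
  split.
    split; first by apply: dvdn_mulr.
    by move=> y i j ir jr; rewrite !block_count_nat // !blk.
  rewrite (weight_nat (r * a) #|F| Nn) exchange_big_nat /=.
  rewrite (eq_big_nat _ _ (F2 := fun y => (r * t)%N)); last first.
    move=> y /andP [_ yF]. rewrite sum_blocks.
    rewrite (eq_big_nat _ _ (F2 := fun _ => t)); last by move=> i /andP [_ ir]; apply: blk.
    by rewrite sum_nat_const_nat subn0.
  rewrite sum_nat_const_nat subn0.
  have fin := @final_ineq R r%:R s%:R ra t%:R #|F|%:R ('C(k, r))%:R c sa #|G|%:R.
  have hs2 : (r%:R * s%:R * ra) ^+ 2 <= (t%:R : R) ^+ 2 * #|F|%:R.
    apply: fin.
    - by rewrite ler1n.
    - by rewrite ler1n.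
    - by rewrite ler1n.
    - exact: sa0.
    - by rewrite sqr_sqrtr // ler0n.
    - by rewrite -(@natrM R 256) ler_nat.
    - by move: Hc; rewrite !natrM.
    - by move: tx2; rewrite -addn1 natrD.
    - exact: gR.
    - by rewrite -natrM ler_nat.
    - by [].
    - by [].
  have hs : r%:R * s%:R * ra <= (t%:R : R) * Num.sqrt #|F|%:R.
    have h0 : 0 <= (t%:R : R) * Num.sqrt #|F|%:R by rewrite mulr_ge0 // sqrtr_ge0.
    have h1 : 0 <= r%:R * s%:R * ra :> R by rewrite !mulr_ge0 // ler0n.
    have e : ((t%:R : R) * Num.sqrt #|F|%:R) ^+ 2 = t%:R ^+ 2 * #|F|%:R.
      by rewrite exprMn sqr_sqrtr // ler0n.
    by rewrite -ler_sqr ?nnegrE // e.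
  have sm0 : 0 <= Num.sqrt (#|F|%:R : R) by apply: sqrtr_ge0.
  apply: le_trans (_ : _ <= r%:R * Num.sqrt #|F|%:R * (t%:R * Num.sqrt #|F|%:R)) _.
    rewrite (_ : (r * s)%:R * Num.sqrt #|F|%:R * (r * a)%:R =
       r%:R * Num.sqrt #|F|%:R * (r%:R * s%:R * ra)); last by rewrite !natrM /ra; ring.
    apply: ler_wpM2l => //. by rewrite mulr_ge0 // ler0n.
  rewrite (_ : r%:R * Num.sqrt #|F|%:R * (t%:R * Num.sqrt #|F|%:R) =
      r%:R * t%:R * (Num.sqrt (#|F|%:R : R)) ^+ 2); last by ring.
  by rewrite sqr_sqrtr ?ler0n // !natrM mulrC.
Qed.

End Helpers.

Local Open Scope ring_scope.

Lemma ord0_False (i : 'I_0) : False.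
Proof. by case: i. Qed.

Lemma contains_empty p q a b (M : 'M[bool]_(p, q)) (N : 'M[bool]_(a, b)) :
  a = 0%N -> b = 0%N -> contains M N.
Proof.
  move=> a0 b0; subst a b.
  pose fa := fun i : 'I_0 => False_rect 'I_p (ord0_False i).
  pose fb := fun i : 'I_0 => False_rect 'I_q (ord0_False i).
  exists fa, fb; split; [|split].
  - by move=> i; case: (ord0_False i).
  - by move=> i; case: (ord0_False i).
  - by move=> i; case: (ord0_False i).
Qed.

Theorem lemma5p4 (R : realType) (r s k : nat) (c : R) (n : nat)
    (M : 'M[bool]_(n, n)) :
  (0 < r)%N -> (0 < s)%N ->
  k = (2 ^ 8 * r ^ 2)%N ->
  (8 * r * s * 'C(k, r))%:R <= c ->
  (k %| n)%N ->
  c * (n%:R * Num.sqrt (n%:R : R)) <= (weight M)%:R ->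
  (exists N : 'M[bool]_(n %/ k, n %/ k),
      contains M N /\
      2%:R * c * ((n %/ k)%:R * Num.sqrt ((n %/ k)%:R : R)) <= (weight N)%:R)
  \/
  (exists (m : nat) (N : 'M[bool]_(r * (n %/ k), m)),
      (0 < m)%N /\ contains M N /\ balanced r N /\
      (r * s)%:R * Num.sqrt (m%:R : R) * (r * (n %/ k))%:R <= (weight N)%:R).
Proof.
  move=> r0 s0 Ek Hc kn.
  case: n M kn => [|p] M kn Hw.
    left. exists (\matrix_(i, j) false). split.
      by apply: contains_empty; rewrite div0n.
    by rewrite div0n mul0r mulr0 ler0n.
  apply: (Helpers.core r0 s0 Ek Hc _ Hw).
  by rewrite mulnC divnK.
Qed.
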